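(* Let $f_1,\dots,f_M:\mathbb{R}\to(0,1)$ be continuous, strictly increasing cumulative distribution functions and let $w_1\ge\dots\ge w_M> 0$ with $\sum_{i=1}^M w_i=1$; set $F(x)=\sum_{i=1}^M w_i f_i(x)$. For $\epsilon\in(0,1)$ let $k$ be the smallest integer with $\sum_{i=1}^k w_i\ge 1-\epsilon$, let $c:=\sum_{i=1}^k w_i$ and $F_k(x):=\frac{1}{c}\sum_{i=1}^k w_i f_i(x)$. Let $p\in(0,1)$ with $p-2\epsilon\in(0,1)$ and $p+2\epsilon\in(0,1)$. Then \[F^{-1}(p-2\epsilon)\le F_k^{-1}(p)\le F^{-1}(p+2\epsilon).\]
   Context: For a continuous strictly increasing cdf $G$ and $q\in(0,1)$, $G^{-1}(q)$ denotes the unique $x$ with $G(x)=q$ (the $q$-quantile). *)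

(* Defs.v *)
From Stdlib Require Import Reals Lra ClassicalEpsilon.
From Coquelicot Require Import Coquelicot.
Open Scope R_scope.

Fixpoint psum (g : nat -> R) (n : nat) : R :=
  match n with
  | O => 0
  | S m => psum g m + g m
  end.

Definition cont_strict_cdf (f : R -> R) : Prop :=
  (forall x, 0 < f x < 1) /\
  (forall x, continuity_pt f x) /\
  (forall x y, x < y -> f x < f y) /\
  is_lim f m_infty 0 /\ is_lim f p_infty 1.

(* G^{-1}(q): the (unique, when it exists) x with G x = q. *)
Definition quantile (G : R -> R) (q : R) : R :=
  epsilon (inhabits 0) (fun x => G x = q).

(* Main.v *)
Require Import Defs.
From Stdlib Require Import Reals Lra Lia ClassicalEpsilon.
From Coquelicot Require Import Coquelicot.
Open Scope R_scope.

Lemma psum_diff_le (g h : nat -> R) (k n : nat) :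
  (k <= n)%nat -> (forall i, (k <= i < n)%nat -> g i <= h i) ->
  psum g n - psum g k <= psum h n - psum h k.
Proof.
  intros Hkn; induction Hkn as [|n Hkn IH]; intros H.
  - lra.
  - simpl. assert (g n <= h n) by (apply H; lia).
    assert (psum g n - psum g k <= psum h n - psum h k) by (apply IH; intros; apply H; lia).
    lra.
Qed.

Lemma lim_lt_ex (G : R -> R) (l q : R) :
  is_lim G m_infty l -> q > l -> exists a, G a < q.
Proof.
  intros H Hq.
  assert (Hn : Rbar_locally (Finite l) (fun y => y < q)).
  { simpl. exists (mkposreal (q - l) ltac:(lra)). intros y Hy.
    unfold ball in Hy; simpl in Hy; unfold AbsRing_ball, abs, minus, plus, opp in Hy; simpl in Hy.
    apply Rabs_lt_between in Hy. simpl in Hy. lra. }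
  specialize (H _ Hn). destruct H as [M HM]. exists (M - 1). apply HM. lra.
Qed.

Lemma lim_gt_ex (G : R -> R) (l q : R) :
  is_lim G p_infty l -> q < l -> exists a, q < G a.
Proof.
  intros H Hq.
  assert (Hn : Rbar_locally (Finite l) (fun y => q < y)).
  { simpl. exists (mkposreal (l - q) ltac:(lra)). intros y Hy.
    unfold ball in Hy; simpl in Hy; unfold AbsRing_ball, abs, minus, plus, opp in Hy; simpl in Hy.
    apply Rabs_lt_between in Hy. simpl in Hy. lra. }
  specialize (H _ Hn). destruct H as [M HM]. exists (M + 1). apply HM. lra.
Qed.

Lemma quantile_spec (G : R -> R) (q l0 l1 : R) :
  continuity G -> (forall x y, x <= y -> G x <= G y) ->
  is_lim G m_infty l0 -> is_lim G p_infty l1 -> l0 < q < l1 ->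
  G (quantile G q) = q.
Proof.
  intros Hc Hm H0 H1 Hq.
  destruct (lim_lt_ex G l0 q H0 ltac:(lra)) as [a Ha].
  destruct (lim_gt_ex G l1 q H1 ltac:(lra)) as [b Hb].
  assert (Hab : a < b).
  { destruct (Rlt_or_le a b) as [h|h]; auto. pose proof (Hm b a h). lra. }
  destruct (IVT (fun x => G x - q) a b) as [z [_ Hz]].
  { intro x. apply continuity_pt_minus; [apply Hc | apply continuity_pt_const; intros u v; auto]. }
  all: try lra.
  unfold quantile. apply epsilon_spec. exists z. lra.
Qed.

Theorem proposition1
  (M : nat) (f : nat -> R -> R) (w : nat -> R)
  (Hf : forall i, (i < M)%nat -> cont_strict_cdf (f i))
  (Hwpos : forall i, (i < M)%nat -> 0 < w i)
  (Hwdec : forall i j, (i <= j)%nat -> (j < M)%nat -> w j <= w i)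
  (Hwsum : psum w M = 1)
  (eps : R) (Heps : 0 < eps < 1)
  (k : nat) (Hk : psum w k >= 1 - eps)
  (Hkmin : forall j, (j < k)%nat -> psum w j < 1 - eps)
  (p : R) (Hp : 0 < p < 1)
  (Hpm : 0 < p - 2 * eps < 1) (Hpp : 0 < p + 2 * eps < 1) :
  let F := fun x => psum (fun i => w i * f i x) M in
  let c := psum w k in
  let Fk := fun x => / c * psum (fun i => w i * f i x) k in
  quantile F (p - 2 * eps) <= quantile Fk p <= quantile F (p + 2 * eps).
Proof.
  intros F c Fk.
  assert (HkM : (k <= M)%nat).
  { destruct (Compare_dec.le_lt_dec k M) as [h|h]; auto. specialize (Hkmin M h). lra. }
  assert (Hc1 : c <= 1).
  { pose proof (psum_diff_le (fun _ => 0) w k M HkM) as H.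
    assert (forall n, psum (fun _ => 0) n = 0) as Z by (induction n; simpl; lra).
    rewrite !Z in H. unfold c. assert (H' : 0 <= psum w M - psum w k).
    { replace 0 with (0 - 0) by lra. apply H. intros i Hi. left; apply Hwpos; lia. }
    lra. }
  assert (Hcpos : 0 < c) by (unfold c; lra).
  assert (Hlim : forall (L : R) (x : Rbar), (forall i, (i < M)%nat -> is_lim (f i) x L) ->
    forall n, (n <= M)%nat -> is_lim (fun y => psum (fun i => w i * f i y) n) x (psum w n * L)).
  { intros L x HL n; induction n as [|n IH]; intros Hn; simpl.
    - replace (0 * L) with 0 by ring. apply is_lim_const.
    - replace ((psum w n + w n) * L) with (psum w n * L + w n * L) by ring.
      apply is_lim_plus'. apply IH; lia.
      apply (is_lim_scal_l (f n) (w n) x L). apply HL; lia. }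
  assert (Hcont : forall n y, (n <= M)%nat -> continuity_pt (fun y => psum (fun i => w i * f i y) n) y).
  { intros n y; induction n as [|n IH]; intros Hn; simpl.
    - apply continuity_pt_const. intros u v; auto.
    - apply continuity_pt_plus. apply IH; lia.
      apply continuity_pt_scal. apply (Hf n ltac:(lia)). }
  assert (Hmono : forall n x y, (n <= M)%nat -> x <= y ->
    psum (fun i => w i * f i x) n <= psum (fun i => w i * f i y) n).
  { intros n x y; induction n as [|n IH]; intros Hn Hxy; simpl.
    - lra.
    - assert (f n x <= f n y).
      { destruct Hxy as [h|h]. left; apply (Hf n ltac:(lia)); auto. subst; lra. }
      assert (0 < w n) by (apply Hwpos; lia).
      pose proof (IH ltac:(lia) Hxy). nra. }
  assert (Hm0 : forall i, (i < M)%nat -> is_lim (f i) m_infty 0) by (intros i Hi; apply (Hf i Hi)).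
  assert (Hp1 : forall i, (i < M)%nat -> is_lim (f i) p_infty 1) by (intros i Hi; apply (Hf i Hi)).
  assert (HF : forall q, 0 < q < 1 -> F (quantile F q) = q).
  { intros q Hq. apply (quantile_spec F q (psum w M * 0) (psum w M * 1)).
    - intro y. apply Hcont; lia.
    - intros; apply Hmono; auto.
    - apply Hlim; auto.
    - apply Hlim; auto.
    - rewrite Hwsum; lra. }
  assert (HFk : Fk (quantile Fk p) = p).
  { apply (quantile_spec Fk p (/c * (psum w k * 0)) (/c * (psum w k * 1))).
    - intro y. apply continuity_pt_scal. apply Hcont; lia.
    - intros. unfold Fk. apply Rmult_le_compat_l. left; apply Rinv_0_lt_compat; lra.
      apply Hmono; auto.
    - apply (is_lim_scal_l _ (/c) m_infty (Finite _)). apply Hlim; auto.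
    - apply (is_lim_scal_l _ (/c) p_infty (Finite _)). apply Hlim; auto.
    - fold c. replace (/ c * (c * 0)) with 0 by (field; lra). replace (/ c * (c * 1)) with 1 by (field; lra). lra. }
  set (x := quantile Fk p) in *.
  assert (HSk : psum (fun i => w i * f i x) k = c * p).
  { unfold Fk in HFk. rewrite <- HFk. field. lra. }
  assert (HT : 0 <= psum (fun i => w i * f i x) M - psum (fun i => w i * f i x) k <= psum w M - psum w k).
  { split.
    - replace 0 with ((fun n => psum (fun _ => 0) n) M - psum (fun _ => 0) k).
      apply psum_diff_le; auto. intros i Hi. destruct (Hf i ltac:(lia)) as [Hb _].
      specialize (Hb x). specialize (Hwpos i ltac:(lia)). nra.
      simpl. assert (forall n, psum (fun _ => 0) n = 0) as Z by (induction n; simpl; lra).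
      rewrite !Z; lra.
    - apply psum_diff_le; auto. intros i Hi. destruct (Hf i ltac:(lia)) as [Hb _].
      specialize (Hb x). specialize (Hwpos i ltac:(lia)). nra. }
  assert (HFx : p - eps <= F x <= p + eps).
  { unfold F. fold c in HT. rewrite HSk in HT. rewrite Hwsum in HT.
    assert (c >= 1 - eps) by (unfold c; lra).
    assert (0 <= (1 - c) * p <= 1 - c) by (split; nra).
    split; nra. }
  split.
  - destruct (Rle_or_lt (quantile F (p - 2*eps)) x) as [h|h]; auto.
    exfalso. pose proof (Hmono M x _ (le_n M) (Rlt_le _ _ h)).
    pose proof (HF (p - 2*eps) Hpm). unfold F in *. lra.
  - destruct (Rle_or_lt x (quantile F (p + 2*eps))) as [h|h]; auto.
    exfalso. pose proof (Hmono M _ x (le_n M) (Rlt_le _ _ h)).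
    pose proof (HF (p + 2*eps) Hpp). unfold F in *. lra.
Qed.
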